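(* Let $(N,\langle\,,\rangle,F)$ be a symplectic $F$-isocrystal of dimension $2n$ which is minuscule of weight $n$. Then there exists an $O_L$-lattice $M$ in $N$ with $M^\perp=M$ such that $M\supset FM\supset\pi M$ and $(FM)^\perp=\pi^{-1}FM$.
   Context: $F$ finite over $\mathbf Q_p$ with uniformizer $\pi$, $L$ the completion of the maximal unramified extension, $O_L$ its integers, $\sigma$ the Frobenius of $L/F$. A symplectic $F$-isocrystal is a $2n$-dimensional $L$-space $N$ with a non-degenerate alternating form $\langle\,,\rangle$ and a $\sigma$-linear bijection $F$ with $\langle Fx,Fy\rangle=c\,\sigma(\langle x,y\rangle)$ for some fixed $c\in L^\times$. It is minuscule of weight $r$ if its slope vector $(\nu_1\ge\dots\ge\nu_{2n})$ (normalized by $\mathrm{val}(\pi)=1$) satisfies $0\le\nu_i\le1$ and $\sum\nu_i=r$. For a lattice $\Lambda$, $\Lambda^\perp=\{x\in N:\langle x,\Lambda\rangle\subset O_L\}$. *)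

(* Defs.v *)
From HB Require Import structures.
From mathcomp Require Import all_boot all_order all_algebra.
Set Implicit Arguments. Unset Strict Implicit. Unset Printing Implicit Defensive.
Import Order.TTheory GRing.Theory Num.Theory.
Local Open Scope ring_scope.

(* The field L = completion of the maximal unramified extension of a   *)
(* p-adic field F (finite over Q_p), axiomatized by its characterizing *)
(* properties:                                                         *)
(*  - L is a field of characteristic 0 with a normalized discrete      *)
(*    valuation v (defined on nonzero elements) and uniformizer pi;    *)
(*  - L is complete for v;                                             *)
(*  - the residue field O_L / pi O_L is algebraically closed of        *)
(*    characteristic p;                                                *)
(*  - sigma is a valuation-preserving field automorphism of L lifting  *)
(*    the q-power Frobenius (q = p^f, f > 0) on the residue field, and *)
(*    pi is sigma-fixed (pi lies in F = L^{sigma}, and is a uniformizer*)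
(*    of F since L/F is unramified).                                   *)

Definition intL (L : fieldType) (v : L -> int) (x : L) : Prop :=
  x = 0 \/ (0 <= v x)%R.

Definition inPk (L : fieldType) (v : L -> int) (pi : L) (k : nat) (x : L) : Prop :=
  intL v (x / pi ^+ k).

Record unramified_completion (L : fieldType) (v : L -> int) (pi : L)
    (sigma : L -> L) (p f : nat) : Prop := {
  uc_char0 : forall m : nat, (0 < m)%N -> (m%:R : L) != 0;
  uc_vM : forall x y : L, x != 0 -> y != 0 -> v (x * y) = v x + v y;
  uc_vD : forall x y : L, x != 0 -> y != 0 -> x + y != 0 ->
            Num.min (v x) (v y) <= v (x + y);
  uc_pi_neq0 : pi != 0;
  uc_vpi : v pi = 1;
  uc_complete : forall u : nat -> L,
      (forall k : nat, exists N : nat, forall m n : nat, (N <= m)%N -> (N <= n)%N ->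
          inPk v pi k (u m - u n)) ->
      exists l : L, forall k : nat, exists N : nat, forall n : nat, (N <= n)%N ->
          inPk v pi k (u n - l);
  uc_residue_closed : forall P : {poly L}, P \is monic -> (1 < size P)%N ->
      (forall i : nat, intL v P`_i) ->
      exists x : L, intL v x /\ inPk v pi 1 P.[x];
  uc_prime : prime p;
  uc_residue_char : inPk v pi 1 (p%:R : L);
  uc_f_gt0 : (0 < f)%N;
  uc_sigmaD : forall x y : L, sigma (x + y) = sigma x + sigma y;
  uc_sigmaM : forall x y : L, sigma (x * y) = sigma x * sigma y;
  uc_sigma1 : sigma 1 = 1;
  uc_sigma_bij : bijective sigma;
  uc_sigma_v : forall x : L, x != 0 -> v (sigma x) = v x;
  uc_sigma_frob : forall x : L, intL v x -> inPk v pi 1 (sigma x - x ^+ (p ^ f));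
  uc_sigma_pi : sigma pi = pi
}.

Definition bform (L : fieldType) (m : nat) (J : 'M[L]_m) (x y : 'rV[L]_m) : L :=
  (x *m J *m y^T) 0 0.

Definition symplectic_isocrystal (L : fieldType) (sigma : L -> L) (m : nat)
    (J : 'M[L]_m) (Fm : 'rV[L]_m -> 'rV[L]_m) (c : L) : Prop :=
  J \in unitmx /\
  (forall x, bform J x x = 0) /\
  (forall x y, Fm (x + y) = Fm x + Fm y) /\
  (forall (a : L) x, Fm (a *: x) = sigma a *: Fm x) /\
  bijective Fm /\
  c != 0 /\
  (forall x y, bform J (Fm x) (Fm y) = c * sigma (bform J x y)).

Definition lattice_of (L : fieldType) (v : L -> int) (d m : nat)
    (B : 'M[L]_(d, m)) (x : 'rV[L]_m) : Prop :=
  exists y : 'rV[L]_d, (forall i, intL v (y 0 i)) /\ x = y *m B.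

Definition img (T U : Type) (g : T -> U) (P : T -> Prop) (u : U) : Prop :=
  exists t, P t /\ u = g t.

Definition sub_eq (T : Type) (P Q : T -> Prop) : Prop := forall x, P x <-> Q x.
Definition sub_le (T : Type) (P Q : T -> Prop) : Prop := forall x, P x -> Q x.

Definition perp (L : fieldType) (v : L -> int) (m : nat) (J : 'M[L]_m)
    (Lam : 'rV[L]_m -> Prop) (x : 'rV[L]_m) : Prop :=
  forall y, Lam y -> intL v (bform J x y).

Definition isoclinic (L : fieldType) (v : L -> int) (pi : L) (m : nat)
    (Fm : 'rV[L]_m -> 'rV[L]_m) (U : 'M[L]_m) (r : int) (s : nat) : Prop :=
  (0 < s)%N /\
  (forall x : 'rV[L]_m, (x <= U)%MS -> (Fm x <= U)%MS) /\
  exists B : 'M[L]_(\rank U, m), row_free B /\ (B == U)%MS /\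
    sub_eq (img (iter s Fm) (lattice_of v B))
           (img (fun x => pi ^ r *: x) (lattice_of v B)).

(* Minuscule of weight w: N has a slope decomposition
   N = (+)_j U_j, U_j isoclinic of slope r_j/s_j, so that the slope
   vector consists of the r_j/s_j with multiplicity dim U_j; all slopes
   lie in [0,1] and their sum (with multiplicity) is w. *)
Definition minuscule_of_weight (L : fieldType) (v : L -> int) (pi : L) (m : nat)
    (Fm : 'rV[L]_m -> 'rV[L]_m) (w : nat) : Prop :=
  exists (k : nat) (U : 'I_k -> 'M[L]_m) (r : 'I_k -> int) (s : 'I_k -> nat),
    [/\ (forall j, isoclinic v pi Fm (U j) (r j) (s j)),
        (\sum_(j < k) U j :=: 1%:M)%MS,
        mxdirect (\sum_(j < k) U j),
        (forall j, (0 <= (r j)%:~R / (s j)%:R :> rat) && ((r j)%:~R / (s j)%:R <= 1 :> rat)) &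
        \sum_(j < k) ((\rank (U j))%:R * ((r j)%:~R / (s j)%:R)) = (w%:R : rat)].

(* Main.v *)
Require Import Defs.
From HB Require Import structures.
From mathcomp Require Import all_boot all_order all_algebra.
From mathcomp Require Import zify ring lra.
From Stdlib Require Import Classical ClassicalEpsilon.
Import Order.TTheory GRing.Theory Num.Theory.
Local Open Scope ring_scope.
Set Implicit Arguments. Unset Strict Implicit. Unset Printing Implicit Defensive.

Section Val.
Variables (L : fieldType) (v : L -> int) (pi : L).
Hypothesis vM : forall x y : L, x != 0 -> y != 0 -> v (x * y) = v x + v y.
Hypothesis vD : forall x y : L, x != 0 -> y != 0 -> x + y != 0 ->
            Num.min (v x) (v y) <= v (x + y).
Hypothesis pi0 : pi != 0.
Hypothesis vpi : v pi = 1.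

Local Notation OL := (intL v).

Lemma v1 : v 1 = 0.
Proof. have := vM (oner_neq0 L) (oner_neq0 L). rewrite mulr1 => h.
have: v 1 + v 1 = v 1 + 0 by rewrite addr0 -h.
by move/addrI. Qed.

Lemma vV x : x != 0 -> v x^-1 = - v x.
Proof.
move=> x0; have := vM x0 (invr_neq0 x0); rewrite mulfV // v1 => h; lia.
Qed.

Lemma vN1 : v (-1) = 0.
Proof.
have n1 : (-1 : L) != 0 by rewrite oppr_eq0 oner_neq0.
have := vM n1 n1; rewrite mulrNN mulr1 v1 => h; lia.
Qed.

Lemma vN x : v (- x) = v x.
Proof.
case: (eqVneq x 0) => [->|x0]; first by rewrite oppr0.
have n1 : (-1 : L) != 0 by rewrite oppr_eq0 oner_neq0.
by rewrite -mulN1r vM // vN1 add0r.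
Qed.

Lemma intL0 : OL 0. Proof. by left. Qed.
Lemma intL1 : OL 1. Proof. by right; rewrite v1. Qed.
Lemma intLN x : OL x -> OL (- x).
Proof. by case=> [->|h]; [left; rewrite oppr0 | right; rewrite vN]. Qed.
Lemma intLD x y : OL x -> OL y -> OL (x + y).
Proof.
case=> [->|hx]; first by rewrite add0r.
case=> [->|hy]; first by rewrite addr0; right.
case: (eqVneq x 0) => [->|x0]; first by rewrite add0r; right.
case: (eqVneq y 0) => [->|y0]; first by rewrite addr0; right.
case: (eqVneq (x + y) 0) => [->|s0]; first by left.
right; apply: le_trans (vD x0 y0 s0).
by rewrite le_min hx hy.
Qed.
Lemma intLB x y : OL x -> OL y -> OL (x - y).
Proof. by move=> hx hy; apply: intLD => //; apply: intLN. Qed.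
Lemma intLM x y : OL x -> OL y -> OL (x * y).
Proof.
case=> [->|hx]; first by rewrite mul0r; left.
case=> [->|hy]; first by rewrite mulr0; left.
case: (eqVneq x 0) => [->|x0]; first by rewrite mul0r; left.
case: (eqVneq y 0) => [->|y0]; first by rewrite mulr0; left.
by right; rewrite vM // addr_ge0.
Qed.
Lemma intL_pi : OL pi. Proof. by right; rewrite vpi. Qed.
Lemma intLX x k : OL x -> OL (x ^+ k).
Proof. move=> h; elim: k => [|k IH]; first exact: intL1. by rewrite exprS; apply: intLM. Qed.
Lemma intL_nat k : OL (k%:R).
Proof. elim: k => [|k IH]; first exact: intL0. by rewrite mulrS; apply: intLD => //; apply: intL1. Qed.

Lemma intL_sum (I : Type) (r : seq I) (P : pred I) (F : I -> L) :
  (forall i, P i -> OL (F i)) -> OL (\sum_(i <- r | P i) F i).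
Proof. move=> h; apply: big_ind => //; [exact: intL0 | exact: intLD]. Qed.
Lemma intL_prod (I : Type) (r : seq I) (P : pred I) (F : I -> L) :
  (forall i, P i -> OL (F i)) -> OL (\prod_(i <- r | P i) F i).
Proof. move=> h; apply: big_ind => //; [exact: intL1 | exact: intLM]. Qed.

Lemma piX_neq0 k : pi ^+ k != 0. Proof. by rewrite expf_neq0. Qed.
Lemma vpiX k : v (pi ^+ k) = k%:Z.
Proof.
elim: k => [|k IH]; first by rewrite expr0 v1.
by rewrite exprS vM ?piX_neq0 // IH vpi; lia.
Qed.

Lemma vX x k : x != 0 -> v (x ^+ k) = v x *+ k.
Proof.
move=> x0; elim: k => [|k IH]; first by rewrite expr0 v1.
by rewrite exprS vM ?expf_neq0 // IH mulrS.
Qed.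

Lemma intL_bound x : exists a : nat, OL (pi ^+ a * x).
Proof.
case: (eqVneq x 0) => [->|x0]; first by exists 0%N; rewrite mulr0; left.
exists (absz (v x)); right; rewrite vM ?piX_neq0 // vpiX; lia.
Qed.
Lemma intL_mono x a b : (a <= b)%N -> OL (pi ^+ a * x) -> OL (pi ^+ b * x).
Proof.
move=> ab h; rewrite -(subnK ab) exprD -mulrA; apply: intLM => //.
exact: intLX intL_pi.
Qed.

Lemma intL_unit x : x != 0 -> v x = 0 -> OL x^-1.
Proof. by move=> x0 h; right; rewrite vV // h. Qed.

Lemma intL_div x y : y != 0 -> v y = 0 -> (OL (x / y) <-> OL x).
Proof.
move=> y0 h; split=> hx.
  have hy : OL y by right; rewrite h.
  by have := intLM hx hy; rewrite divfK.
apply: intLM => //; exact: intL_unit.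
Qed.


Definition intM p q (A : 'M[L]_(p, q)) := forall i j, OL (A i j).

Lemma intM_mul p q r (A : 'M[L]_(p, q)) (B : 'M[L]_(q, r)) :
  intM A -> intM B -> intM (A *m B).
Proof. by move=> hA hB i j; rewrite mxE; apply: intL_sum => k _; apply: intLM. Qed.

Lemma intM_add p q (A B : 'M[L]_(p, q)) : intM A -> intM B -> intM (A + B).
Proof. by move=> hA hB i j; rewrite mxE; apply: intLD. Qed.

Lemma intM_opp p q (A : 'M[L]_(p, q)) : intM A -> intM (- A).
Proof. by move=> hA i j; rewrite mxE; apply: intLN. Qed.

Lemma intM_scale p q a (A : 'M[L]_(p, q)) : OL a -> intM A -> intM (a *: A).
Proof. by move=> ha hA i j; rewrite mxE; apply: intLM. Qed.

Lemma intM1 n : intM (1%:M : 'M[L]_n).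
Proof. by move=> i j; rewrite mxE; case: (i == j); [apply: intL1 | apply: intL0]. Qed.

Lemma intM0 p q : intM (0 : 'M[L]_(p, q)).
Proof. by move=> i j; rewrite mxE; apply: intL0. Qed.

Lemma intM_det n (A : 'M[L]_n) : intM A -> OL (\det A).
Proof.
move=> hA; rewrite /determinant; apply: intL_sum => s _; apply: intLM.
  by apply: intLX; apply: intLN; apply: intL1.
by apply: intL_prod => i _; apply: hA.
Qed.

Lemma intM_adj n (A : 'M[L]_n) : intM A -> intM (\adj A).
Proof.
move=> hA i j; rewrite mxE /cofactor; apply: intLM.
  by apply: intLX; apply: intLN; apply: intL1.
by apply: intM_det => a b; rewrite !mxE; apply: hA.
Qed.

Lemma intM_row p q i (A : 'M[L]_(p, q)) : intM A -> intM (row i A).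
Proof. by move=> h a b; rewrite mxE; apply: h. Qed.

Lemma intM_tr p q (A : 'M[L]_(p, q)) : intM A -> intM A^T.
Proof. by move=> h a b; rewrite mxE; apply: h. Qed.

Lemma bound_fin (I : finType) (F : I -> L) : exists a : nat, forall i, OL (pi ^+ a * F i).
Proof.
suff: forall s : seq I, exists a : nat, forall i, i \in s -> OL (pi ^+ a * F i).
  by case/(_ (enum I)) => a h; exists a => i; apply: h; rewrite mem_enum.
elim=> [|x s [a IH]]; first by exists 0%N.
have [b hb] := intL_bound (F x).
exists (maxn a b) => i; rewrite inE => /orP [/eqP->|/IH h].
  by apply: intL_mono hb; apply: leq_maxr.
by apply: intL_mono h; apply: leq_maxl.
Qed.

Lemma intM_bound p q (A : 'M[L]_(p, q)) : exists a : nat, intM (pi ^+ a *: A).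
Proof.
have [a h] := bound_fin (fun ij : 'I_p * 'I_q => A ij.1 ij.2).
by exists a => i j; rewrite mxE; apply: (h (i, j)).
Qed.

Lemma intM_mono p q (A : 'M[L]_(p, q)) a b : (a <= b)%N -> intM (pi ^+ a *: A) -> intM (pi ^+ b *: A).
Proof. move=> ab h i j; move: (h i j); rewrite !mxE; exact: intL_mono. Qed.

Local Notation lat := (lattice_of v).

Lemma lat0 d m (B : 'M[L]_(d, m)) : lat B 0.
Proof. by exists 0; split; [move=> i; rewrite mxE; apply: intL0 | rewrite mul0mx]. Qed.

Lemma latD d m (B : 'M[L]_(d, m)) x y : lat B x -> lat B y -> lat B (x + y).
Proof.
case=> a [ha ->] [b [hb ->]]; exists (a + b); split; last by rewrite mulmxDl.
by move=> i; rewrite mxE; apply: intLD.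
Qed.

Lemma latZ d m (B : 'M[L]_(d, m)) c x : OL c -> lat B x -> lat B (c *: x).
Proof.
move=> hc [a [ha ->]]; exists (c *: a); split; last by rewrite scalemxAl.
by move=> i; rewrite mxE; apply: intLM.
Qed.

Lemma lat_row d m (B : 'M[L]_(d, m)) i : lat B (row i B).
Proof.
exists (delta_mx 0 i); split; last by rewrite -rowE.
by move=> j; rewrite mxE; case: (_ && _); [apply: intL1 | apply: intL0].
Qed.

Definition submod m (X : 'rV[L]_m -> Prop) :=
  [/\ X 0, (forall x y, X x -> X y -> X (x + y)) & (forall c x, OL c -> X x -> X (c *: x))].

Lemma submod_lat d m (B : 'M[L]_(d, m)) : submod (lat B).
Proof. by split; [apply: lat0 | apply: latD | apply: latZ]. Qed.

Lemma submod_sum m (X : 'rV[L]_m -> Prop) (I : finType) (c : I -> L) (g : I -> 'rV_m) :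
  submod X -> (forall i, OL (c i)) -> (forall i, X (g i)) -> X (\sum_i c i *: g i).
Proof.
case=> X0 XD XZ hc hg; apply: big_ind => //; by move=> i _; apply: XZ.
Qed.

Lemma lat_sub d m (B : 'M[L]_(d, m)) (X : 'rV[L]_m -> Prop) :
  submod X -> (forall i, X (row i B)) -> sub_le (lat B) X.
Proof.
move=> sX hX x [y [hy ->]]; rewrite mulmx_sum_row; apply: submod_sum => //.
Qed.

Lemma latE m (B : 'M[L]_m) x : B \in unitmx -> (lat B x <-> intM (x *m invmx B)).
Proof.
move=> uB; split.
  by case=> y [hy ->] i j; rewrite mulmxK // (ord1 i); apply: hy.
move=> h; exists (x *m invmx B); split; first by move=> i; apply: h.
by rewrite mulmxKV.
Qed.

Lemma fin_choice (I : finType) (T : Type) (P : I -> T -> Prop) :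
  (forall i, exists t, P i t) -> exists g : I -> T, forall i, P i (g i).
Proof.
move=> H; exists (fun i => proj1_sig (constructive_indefinite_description _ (H i))).
by move=> i; case: (constructive_indefinite_description _ _).
Qed.

Lemma det_neq0 m (B : 'M[L]_m) : B \in unitmx -> \det B != 0.
Proof. by rewrite unitmxE unitfE. Qed.

Lemma intM_inv m (Z : 'M[L]_m) : intM Z -> Z \in unitmx -> v (\det Z) = 0 -> intM (invmx Z).
Proof.
move=> hZ uZ h; rewrite /invmx uZ; apply: intM_scale; last exact: intM_adj.
by apply: intL_unit => //; apply: det_neq0.
Qed.

Lemma vdet_ge0 m (Z : 'M[L]_m) : intM Z -> \det Z != 0 -> 0 <= v (\det Z).
Proof. by move=> hZ nz; case: (intM_det hZ) => // h; rewrite h eqxx in nz. Qed.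

Lemma index_le m (B B' : 'M[L]_m) : B \in unitmx -> sub_le (lat B) (lat B') ->
  [/\ B' \in unitmx, v (\det B') <= v (\det B) &
      (v (\det B') = v (\det B) -> sub_le (lat B') (lat B))].
Proof.
move=> uB sBB'.
have [g hg] := fin_choice (fun i => sBB' _ (lat_row B i)).
pose Z := \matrix_(i, j) g i 0 j.
have eB : B = Z *m B'.
  apply/row_matrixP => i; rewrite row_mul (proj2 (hg i)); congr (_ *m _).
  apply/rowP => j; by rewrite !mxE.
have hZ : intM Z by move=> i j; rewrite mxE; apply: (proj1 (hg i)).
have dB := det_neq0 uB.
have dE : \det B = \det Z * \det B' by rewrite eB det_mulmx.
have dZ : \det Z != 0 by apply: contraNneq dB; rewrite dE => ->; rewrite mul0r.
have dB' : \det B' != 0 by apply: contraNneq dB; rewrite dE => ->; rewrite mulr0.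
have uB' : B' \in unitmx by rewrite unitmxE unitfE.
have uZ : Z \in unitmx by rewrite unitmxE unitfE.
have vE : v (\det B) = v (\det Z) + v (\det B') by rewrite dE vM.
have vZ := vdet_ge0 hZ dZ.
split => //; first by rewrite vE lerDr.
move=> eq; have vZ0 : v (\det Z) = 0.
  have : v (\det Z) + v (\det B') = 0 + v (\det B') by rewrite -vE eq add0r.
  by move/addIr.
have hZi := intM_inv hZ uZ vZ0.
have eB' : B' = invmx Z *m B by rewrite eB mulKmx.
move=> x [y [hy ->]]; exists (y *m invmx Z); split; last by rewrite eB' mulmxA.
by move=> i; apply: intM_mul => //; move=> a b; rewrite (ord1 a); apply: hy.
Qed.

Lemma argmin_int (I : finType) (F : I -> int) (P : pred I) (j : I) :
  P j -> exists i, P i /\ forall k, P k -> F i <= F k.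
Proof.
move=> Pj; case: (arg_minP F Pj) => i Pi h; exists i; split => // k Pk.
Qed.

Lemma lat_lower m (B : 'M[L]_m) (a : nat) :
  B \in unitmx -> intM (pi ^+ a *: B) -> 0 <= v (\det B) + (a * m)%:R.
Proof.
move=> uB h; have := vdet_ge0 h.
rewrite detZ -exprM mulf_neq0 ?piX_neq0 ?det_neq0 // => /(_ isT).
rewrite vM ?piX_neq0 ?det_neq0 // vpiX => H. 
by rewrite addrC natz.
Qed.

Lemma sand_step m (X : 'rV[L]_m -> Prop) (B : 'M[L]_m) :
  submod X -> B \in unitmx -> sub_le (lat B) X -> ~ sub_le X (lat B) ->
  exists B', [/\ B' \in unitmx, sub_le (lat B') X & v (\det B') < v (\det B)].
Proof.
move=> sX uB sB nsub.
have [x [Xx nx]] : exists x, X x /\ ~ lat B x.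
  apply: NNPP => H; apply: nsub => x Xx; apply: NNPP => nx; apply: H; by exists x.
set y := x *m invmx B.
have ny : ~ intM y by move=> h; apply: nx; apply/(latE _ uB).
have [j nj] : exists j, ~ OL (y 0 j).
  apply: NNPP => H; apply: ny => i j'; rewrite (ord1 i); apply: NNPP => nj; apply: H; by exists j'.
have yj0 : y 0 j != 0 by apply/eqP => e; apply: nj; rewrite e; left.
have vj : v (y 0 j) < 0.
  by rewrite ltNge; apply/negP => h; apply: nj; right.
have [i [yi0 imin]] := argmin_int (fun k => v (y 0 k)) (P := fun k => y 0 k != 0) yj0.
have vi : v (y 0 i) < 0 by apply: le_lt_trans (imin j yj0) vj.
pose B' := \matrix_k (if k == i then x else row k B).
have rowB' k : row k B' = if k == i then x else row k B by rewrite rowK.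
have sBB' : sub_le (lat B) (lat B').
  apply: lat_sub (submod_lat B') _ => k.
  case: (eqVneq k i) => [->|ki]; last by have := lat_row B' k; rewrite rowB' (negbTE ki).
  have xE : x = \sum_k y 0 k *: row k B by rewrite -mulmx_sum_row /y mulmxKV.
  pose c k := if k == i then (y 0 i)^-1 else - (y 0 k / y 0 i).
  have -> : row i B = \sum_k c k *: row k B'.
    rewrite (bigD1 i) //= rowB' /c eqxx.
    under eq_bigr => k' ki do rewrite rowB' (negbTE ki).
    rewrite xE (bigD1 i) //= scalerDr scalerA mulVf // scale1r.
    rewrite scaler_sumr -addrA -big_split /= big1 ?addr0 // => k' ki.
    by rewrite scalerA scaleNr mulrC addrN.
  apply: submod_sum (submod_lat B') _ (lat_row B') => k2.
  rewrite /c; case: eqVneq => [_|ki].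
    by right; rewrite vV // oppr_ge0 ltW.
  apply: intLN; case: (eqVneq (y 0 k2) 0) => [->|yk0]; first by rewrite mul0r; left.
  right; rewrite vM ?invr_neq0 // vV // subr_ge0; exact: imin.
have [uB' le eqc] := index_le uB sBB'.
exists B'; split => //.
  apply: lat_sub sX _ => k; rewrite rowB'; case: (k == i) => //.
  exact: sB (lat_row B k).
rewrite lt_neqAle le andbT; apply/eqP => E; apply: nx; apply: (eqc E).
by have := lat_row B' i; rewrite rowB' eqxx.
Qed.

Lemma sandwich m (X : 'rV[L]_m -> Prop) (B0 : 'M[L]_m) (a : nat) :
  submod X -> B0 \in unitmx -> sub_le (lat B0) X ->
  (forall x, X x -> intM (pi ^+ a *: x)) ->
  exists B, B \in unitmx /\ sub_eq (lat B) X.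
Proof.
move=> sX uB0 sB0 bX.
have low : forall B : 'M[L]_m, B \in unitmx -> sub_le (lat B) X ->
    0 <= v (\det B) + (a * m)%:R.
  move=> B uB sB; apply: lat_lower uB _ => i j.
  by have := bX _ (sB _ (lat_row B i)) 0 j; rewrite !mxE.
suff: forall N : nat, forall B : 'M[L]_m, B \in unitmx -> sub_le (lat B) X ->
    v (\det B) + (a * m)%:R <= N%:R -> exists B, B \in unitmx /\ sub_eq (lat B) X.
  move=> H; have := low _ uB0 sB0.
  set z := _ + _ => z0.
  apply: (H (absz z) B0) => //; rewrite -/z; lia.
elim=> [|N IH] B uB sB hN;
  (case: (classic (sub_le X (lat B))) => [sXB|nsXB];
   [by exists B; split => // x; split; [apply: sB | apply: sXB] | ]);
  have [B' [uB' sB' lt']] := sand_step sX uB sB nsXB.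
  have := low _ uB' sB'; move: hN lt'; set z1 := v (\det B); set z2 := v (\det B'); lia.
apply: (IH B') => //; move: hN lt'; set z1 := v (\det B); set z2 := v (\det B'); lia.
Qed.

Variable sigma : L -> L.
Hypothesis sD : forall x y : L, sigma (x + y) = sigma x + sigma y.
Hypothesis sM : forall x y : L, sigma (x * y) = sigma x * sigma y.
Hypothesis s1 : sigma 1 = 1.
Hypothesis sbij : bijective sigma.
Hypothesis sv : forall x : L, x != 0 -> v (sigma x) = v x.
Hypothesis spi : sigma pi = pi.

Lemma s0 : sigma 0 = 0.
Proof. have := sD 0 0; rewrite addr0 => h. by have := subrr (sigma 0); rewrite {1}h addrK. Qed.
Lemma sN x : sigma (- x) = - sigma x.
Proof. by apply/eqP; rewrite -subr_eq0 opprK -sD addNr s0. Qed.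
Lemma sB x y : sigma (x - y) = sigma x - sigma y.
Proof. by rewrite sD sN. Qed.
Lemma s_inj : injective sigma.
Proof. by case: sbij => g h1 h2 x y e; rewrite -(h1 x) e h1. Qed.
Lemma s_eq0 x : (sigma x == 0) = (x == 0).
Proof. by apply/eqP/eqP => [h|->]; [apply: s_inj; rewrite h s0 | apply: s0]. Qed.
Lemma sX x k : sigma (x ^+ k) = sigma x ^+ k.
Proof. by elim: k => [|k IH]; rewrite ?expr0 ?s1 // !exprS sM IH. Qed.
Lemma spiX k : sigma (pi ^+ k) = pi ^+ k.
Proof. by rewrite sX spi. Qed.
Lemma sV x : sigma (x^-1) = (sigma x)^-1.
Proof.
case: (eqVneq x 0) => [->|x0]; first by rewrite invr0 s0 invr0.
have sx0 : sigma x != 0 by rewrite s_eq0.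
by apply: (mulfI sx0); rewrite -sM !mulfV // s1.
Qed.
Lemma s_nat k : sigma k%:R = k%:R.
Proof. by elim: k => [|k IH]; rewrite ?s0 // !mulrS sD s1 IH. Qed.
Lemma s_sign k : sigma ((-1) ^+ k) = (-1) ^+ k.
Proof. by rewrite sX sN s1. Qed.
Lemma s_sum (I : Type) (r : seq I) (P : pred I) (F : I -> L) :
  sigma (\sum_(i <- r | P i) F i) = \sum_(i <- r | P i) sigma (F i).
Proof. exact: (big_morph _ sD s0). Qed.
Lemma s_prod (I : Type) (r : seq I) (P : pred I) (F : I -> L) :
  sigma (\prod_(i <- r | P i) F i) = \prod_(i <- r | P i) sigma (F i).
Proof. exact: (big_morph _ sM s1). Qed.
Lemma s_int x : OL (sigma x) <-> OL x.
Proof.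
split; case=> [h|h].
- by left; apply: s_inj; rewrite h s0.
- case: (eqVneq x 0) => [->|x0]; [by left | by right; rewrite -sv].
- by left; rewrite h s0.
- case: (eqVneq x 0) => [->|x0]; [by left; rewrite s0 | by right; rewrite sv].
Qed.

Local Notation sm := (map_mx sigma).

Lemma sm_mul p q r (A : 'M[L]_(p, q)) (B : 'M[L]_(q, r)) : sm (A *m B) = sm A *m sm B.
Proof. by apply/matrixP => i j; rewrite !mxE s_sum; apply: eq_bigr => k _; rewrite sM !mxE. Qed.
Lemma sm_add p q (A B : 'M[L]_(p, q)) : sm (A + B) = sm A + sm B.
Proof. by apply/matrixP => i j; rewrite !mxE sD. Qed.
Lemma sm_scale p q a (A : 'M[L]_(p, q)) : sm (a *: A) = sigma a *: sm A.
Proof. by apply/matrixP => i j; rewrite !mxE sM. Qed.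
Lemma sm_tr p q (A : 'M[L]_(p, q)) : sm A^T = (sm A)^T.
Proof. by apply/matrixP => i j; rewrite !mxE. Qed.
Lemma sm1 n : sm (1%:M : 'M[L]_n) = 1%:M.
Proof. by apply/matrixP => i j; rewrite !mxE; case: (i == j); rewrite ?s1 ?s0. Qed.
Lemma sm_det n (A : 'M[L]_n) : \det (sm A) = sigma (\det A).
Proof.
rewrite /determinant s_sum; apply: eq_bigr => s _.
by rewrite sM s_sign s_prod; congr (_ * _); apply: eq_bigr => i _; rewrite mxE.
Qed.
Lemma intM_sm p q (A : 'M[L]_(p, q)) : intM (sm A) <-> intM A.
Proof.
split=> h i j; [apply/s_int; have := h i j; rewrite mxE | rewrite mxE; apply/s_int; apply: h].
by [].
Qed.
Lemma sm_unit n (A : 'M[L]_n) : (sm A \in unitmx) = (A \in unitmx).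
Proof. by rewrite !unitmxE !unitfE sm_det s_eq0. Qed.

Lemma sbij_ex : exists g : L -> L, cancel sigma g /\ cancel g sigma.
Proof. by case: sbij => g h1 h2; exists g. Qed.
Definition sinv : L -> L := proj1_sig (constructive_indefinite_description _ sbij_ex).
Lemma sinvK : cancel sinv sigma.
Proof. by rewrite /sinv; case: constructive_indefinite_description => g []. Qed.
Lemma sKinv : cancel sigma sinv.
Proof. by rewrite /sinv; case: constructive_indefinite_description => g []. Qed.
Lemma sinv_int x : OL (sinv x) <-> OL x.
Proof. by rewrite -s_int sinvK. Qed.
Lemma sinv_pi : sinv pi = pi.
Proof. by rewrite -{1}spi sKinv. Qed.
Lemma sinvM x y : sinv (x * y) = sinv x * sinv y.
Proof. by apply: s_inj; rewrite sM !sinvK. Qed.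

Lemma sm_surj p q (A : 'M[L]_(p, q)) : exists B, sm B = A /\ (intM A -> intM B).
Proof.
exists (map_mx sinv A); split; first by apply/matrixP => i j; rewrite !mxE sinvK.
by move=> h i j; rewrite mxE; apply/sinv_int; apply: h.
Qed.

Variables (m : nat) (J : 'M[L]_m) (Fm : 'rV[L]_m -> 'rV[L]_m) (c : L).
Hypothesis FD : forall x y, Fm (x + y) = Fm x + Fm y.
Hypothesis FZ : forall (a : L) x, Fm (a *: x) = sigma a *: Fm x.
Hypothesis Fbij : bijective Fm.
Hypothesis Junit : J \in unitmx.
Hypothesis Jalt : forall x, bform J x x = 0.
Hypothesis Fform : forall x y, bform J (Fm x) (Fm y) = c * sigma (bform J x y).
Hypothesis c0 : c != 0.

Lemma F0 : Fm 0 = 0.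
Proof. by have := FZ 0 0; rewrite scale0r s0 scale0r. Qed.
Lemma F_sum (I : finType) (a : I -> L) (g : I -> 'rV_m) :
  Fm (\sum_i a i *: g i) = \sum_i sigma (a i) *: Fm (g i).
Proof.
rewrite (big_morph _ FD F0); apply: eq_bigr => i _; exact: FZ.
Qed.

Definition FB d (B : 'M[L]_(d, m)) := \matrix_i Fm (row i B).

Lemma F_mul d (y : 'rV[L]_d) (B : 'M[L]_(d, m)) : Fm (y *m B) = sm y *m FB B.
Proof.
rewrite !mulmx_sum_row F_sum; apply: eq_bigr => i _; by rewrite rowK mxE.
Qed.

Lemma F_lat d (B : 'M[L]_(d, m)) : sub_eq (img Fm (lat B)) (lat (FB B)).
Proof.
move=> x; split.
  case=> _ [[y [hy ->]] ->]; exists (sm y); split; last exact: F_mul.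
  by move=> i; rewrite mxE; apply/s_int.
case=> z [hz ->]; have [y [ey hy]] := sm_surj z.
exists (y *m B); split; last by rewrite F_mul ey.
exists y; split => //; move=> i; apply: (hy _ 0 i) => a b; rewrite (ord1 a); exact: hz.
Qed.

Lemma FpiX k x : Fm (pi ^+ k *: x) = pi ^+ k *: Fm x.
Proof. by rewrite FZ spiX. Qed.

Lemma Fbij_ex : exists g, cancel Fm g /\ cancel g Fm.
Proof. by case: Fbij => g h1 h2; exists g. Qed.
Definition Fi := proj1_sig (constructive_indefinite_description _ Fbij_ex).
Lemma FiK : cancel Fi Fm.
Proof. by rewrite /Fi; case: constructive_indefinite_description => g []. Qed.
Lemma FKi : cancel Fm Fi.
Proof. by rewrite /Fi; case: constructive_indefinite_description => g []. Qed.
Lemma F_inj : injective Fm.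
Proof. exact: can_inj FKi. Qed.

Local Notation bf := (bform J).
Lemma bfE x y : bf x y = (x *m J *m y^T) 0 0.
Proof. by []. Qed.
Lemma bfDl x x' y : bf (x + x') y = bf x y + bf x' y.
Proof. by rewrite /bform !mulmxDl mxE. Qed.
Lemma bfDr x y y' : bf x (y + y') = bf x y + bf x y'.
Proof. by rewrite /bform linearD /= mulmxDr mxE. Qed.
Lemma bfZl a x y : bf (a *: x) y = a * bf x y.
Proof. by rewrite /bform -!scalemxAl mxE. Qed.
Lemma bfZr a x y : bf x (a *: y) = a * bf x y.
Proof. by rewrite /bform linearZ /= -scalemxAr mxE. Qed.
Lemma bf0l y : bf 0 y = 0.
Proof. by have := bfZl 0 0 y; rewrite scale0r mul0r. Qed.
Lemma bf0r y : bf y 0 = 0.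
Proof. by have := bfZr 0 y 0; rewrite scale0r mul0r. Qed.
Lemma bf_anti x y : bf y x = - bf x y.
Proof.
have := Jalt (x + y); rewrite bfDl !bfDr !Jalt add0r addr0 => /eqP.
by rewrite addrC addr_eq0 => /eqP.
Qed.
Lemma bf_row x d (B : 'M[L]_(d, m)) i : bf x (row i B) = (x *m J *m B^T) 0 i.
Proof. by rewrite /bform !mxE; apply: eq_bigr => k _; rewrite !mxE. Qed.

Lemma perp_lat (B : 'M[L]_m) : B \in unitmx ->
  sub_eq (perp v J (lat B)) (lat (invmx (J *m B^T))).
Proof.
move=> uB; have uC : J *m B^T \in unitmx by rewrite unitmx_mul Junit unitmx_tr.
have uCi : invmx (J *m B^T) \in unitmx by rewrite unitmx_inv.
move=> x; rewrite (latE _ uCi) invmxK mulmxA; split.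
  move=> h i j; rewrite (ord1 i) -bf_row; apply: h; exact: lat_row.
move=> h y [z [hz ->]]; rewrite /bform trmx_mul !mulmxA mxE.
apply: intL_sum => k _; apply: intLM; first exact: h.
by rewrite mxE; apply: hz.
Qed.

Lemma J_tr : J^T = - J.
Proof.
have E i j : J i j = bf (row i 1%:M) (row j 1%:M).
  by rewrite bf_row trmx1 mulmx1 -row_mul mul1mx mxE.
by apply/matrixP => i j; rewrite !mxE !E bf_anti.
Qed.

Lemma perp_latE (C : 'M[L]_m) x : perp v J (lat C) x <-> intM (x *m J *m C^T).
Proof.
split.
  move=> h i j; rewrite (ord1 i) -bf_row; apply: h; exact: lat_row.
move=> h y [z [hz ->]]; rewrite /bform trmx_mul !mulmxA mxE.
apply: intL_sum => k _; apply: intLM; first exact: h.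
by rewrite mxE; apply: hz.
Qed.

Lemma perp_perp (B : 'M[L]_m) : B \in unitmx ->
  sub_le (perp v J (perp v J (lat B))) (lat B).
Proof.
move=> uB z hz.
have uC : J *m B^T \in unitmx by rewrite unitmx_mul Junit unitmx_tr.
set C := invmx (J *m B^T).
have hP : sub_eq (perp v J (lat B)) (lat C) by apply: perp_lat.
have hz' : perp v J (lat C) z by move=> y /hP; apply: hz.
move/perp_latE: hz'.
have uBJ : B *m - J \in unitmx.
  by rewrite unitmx_mul uB -scaleN1r unitmxZ ?Junit // unitrN unitr1.
have eJ : J = (- invmx B) *m (B *m - J).
  by rewrite mulNmx mulmxA mulVmx // mul1mx opprK.
have eJC : J *m C^T = - invmx B.
  by rewrite /C trmx_inv trmx_mul trmxK J_tr {1}eJ mulmxK.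
move=> h; apply/(latE _ uB) => i j.
by have := h i j; rewrite -mulmxA eJC mulmxN mxE => /intLN; rewrite opprK.
Qed.

Definition Dieu (X : 'rV[L]_m -> Prop) :=
  sub_le (img Fm X) X /\ sub_le (img (fun x => pi *: x) X) (img Fm X).

Definition sumP (X Y : 'rV[L]_m -> Prop) x := exists a b, [/\ X a, Y b & x = a + b].

Lemma submod_sumP (X Y : 'rV[L]_m -> Prop) : submod X -> submod Y -> submod (sumP X Y).
Proof.
case=> X0 XD XZ [Y0 YD YZ]; split.
- by exists 0, 0; rewrite addr0.
- move=> _ _ [a [b [Xa Yb ->]]] [a' [b' [Xa' Yb' ->]]].
  by exists (a + a'), (b + b'); split; [apply: XD|apply: YD|rewrite addrACA].
- move=> t _ ht [a [b [Xa Yb ->]]].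
  by exists (t *: a), (t *: b); split; [apply: XZ|apply: YZ|rewrite scalerDr].
Qed.

Lemma submod_imgF (X : 'rV[L]_m -> Prop) : submod X -> submod (img Fm X).
Proof.
case=> X0 XD XZ; split.
- by exists 0; rewrite F0.
- by move=> _ _ [a [Xa ->]] [b [Xb ->]]; exists (a + b); rewrite FD; split => //; apply: XD.
- move=> t _ ht [a [Xa ->]]; exists (sinv t *: a); split; last by rewrite FZ sinvK.
  by apply: XZ => //; apply/sinv_int.
Qed.

Lemma submod_imgpi k (X : 'rV[L]_m -> Prop) : submod X -> submod (img (fun x => pi ^+ k *: x) X).
Proof.
case=> X0 XD XZ; split.
- by exists 0; rewrite scaler0.
- by move=> _ _ [a [Xa ->]] [b [Xb ->]]; exists (a + b); rewrite scalerDr; split => //; apply: XD.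
- move=> t _ ht [a [Xa ->]]; exists (t *: a); split; last by rewrite !scalerA mulrC.
  by apply: XZ.
Qed.

Lemma submod_line (x0 : 'rV[L]_m) : submod (fun y => exists t, OL t /\ y = t *: x0).
Proof.
split.
- by exists 0; split; [left|rewrite scale0r].
- by move=> _ _ [a [ha ->]] [b [hb ->]]; exists (a + b); rewrite scalerDl; split => //; apply: intLD.
- by move=> t _ ht [a [ha ->]]; exists (t * a); rewrite scalerA; split => //; apply: intLM.
Qed.

Lemma Dieu_sumP (X Y : 'rV[L]_m -> Prop) : submod X -> submod Y -> Dieu X ->
  (forall b, Y b -> sumP X Y (Fm b)) ->
  (forall b, Y b -> exists w, sumP X Y w /\ pi *: b = Fm w) -> Dieu (sumP X Y).
Proof.
move=> sX sY [DX1 DX2] hF hpi.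
have [S0 SD SZ] := submod_sumP sX sY.
have [Y0 _ _] := sY.
split.
  move=> y [t [[a [b [Xa Yb ->]]] ->]]; rewrite FD; apply: SD (hF _ Yb).
  have XFa := DX1 (Fm a) (ex_intro _ a (conj Xa erefl)).
  by exists (Fm a), 0; rewrite addr0.
move=> y [t [[a [b [Xa Yb ->]]] ->]]; rewrite scalerDr.
have [a' [Xa' ea]] := DX2 (pi *: a) (ex_intro _ a (conj Xa erefl)).
have [w [Sw ew]] := hpi _ Yb.
exists (a' + w); split; last by rewrite FD ea ew.
by apply: SD Sw; exists a', 0; rewrite addr0.
Qed.

Lemma integral_sumP (X Y : 'rV[L]_m -> Prop) :
  (forall a a', X a -> X a' -> OL (bf a a')) ->
  (forall a b, X a -> Y b -> OL (bf a b)) ->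
  (forall b b', Y b -> Y b' -> OL (bf b b')) ->
  sub_le (sumP X Y) (perp v J (sumP X Y)).
Proof.
move=> hXX hXY hYY _ [a [b [Xa Yb ->]]] _ [a' [b' [Xa' Yb' ->]]].
rewrite !bfDl !bfDr; repeat apply: intLD; auto.
by rewrite bf_anti; apply: intLN; apply: hXY.
Qed.

Lemma submod_perp (X : 'rV[L]_m -> Prop) : submod (perp v J X).
Proof.
split.
- by move=> y _; rewrite bf0l; left.
- by move=> x x' hx hx' y Xy; rewrite bfDl; apply: intLD; [apply: hx|apply: hx'].
- by move=> t x ht hx y Xy; rewrite bfZl; apply: intLM => //; apply: hx.
Qed.

Lemma Dieu_eq (X Y : 'rV[L]_m -> Prop) : sub_eq X Y -> Dieu X -> Dieu Y.
Proof.
move=> e [D1 D2]; split.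
  by move=> _ [t [/e Xt ->]]; apply/e; apply: D1; exists t.
move=> _ [t [/e Xt ->]]; have [w [Xw ->]] := D2 (pi *: t) (ex_intro _ t (conj Xt erefl)).
by exists w; split => //; apply/e.
Qed.

Lemma perp_eq (X Y : 'rV[L]_m -> Prop) : sub_eq X Y -> sub_eq (perp v J X) (perp v J Y).
Proof. by move=> e x; split => h y /e; apply: h. Qed.

Lemma lat_bounded d (C : 'M[L]_(d, m)) : exists a : nat, forall x, lat C x -> intM (pi ^+ a *: x).
Proof.
have [a ha] := intM_bound C; exists a => _ [y [hy ->]].
rewrite scalemxAr; apply: intM_mul => // i j; rewrite (ord1 i); exact: hy.
Qed.

Lemma lat_contains (B : 'M[L]_m) : B \in unitmx ->
  exists b : nat, forall w, intM w -> lat B (pi ^+ b *: w).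
Proof.
move=> uB; have [b hb] := intM_bound (invmx B); exists b => w hw.
apply/(latE _ uB); rewrite -scalemxAl scalemxAr; exact: intM_mul.
Qed.

Lemma min_nat (Q : nat -> Prop) N : Q N -> exists e, Q e /\ forall k, (k < e)%N -> ~ Q k.
Proof.
move: N; apply: ltn_ind => N IH QN.
case: (classic (exists k, (k < N)%N /\ Q k)) => [[k [kN Qk]]|H].
  exact: IH kN Qk.
by exists N; split => // k kN Qk; apply: H; exists k.
Qed.

Hypothesis vc : v c = 1.

Lemma intc_eq t s : pi * t = c * s -> (OL t <-> OL s).
Proof.
move=> e.
have pc0 : pi / c != 0 by rewrite mulf_neq0 ?invr_neq0.
have vpc : v (pi / c) = 0 by rewrite vM ?invr_neq0 // vV // vpi vc subrr.
have -> : t = s / (pi / c).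
  by apply: (mulfI pi0); rewrite e; field; rewrite c0 pi0.
exact: intL_div.
Qed.

Lemma intc s : OL (c * s) <-> OL (pi * s).
Proof. by apply: intc_eq; rewrite mulrCA. Qed.

Lemma perp_Dieu (X : 'rV[L]_m -> Prop) : Dieu X -> Dieu (perp v J X).
Proof.
move=> [D1 D2]; split.
  move=> _ [x [hx ->]] w Xw.
  have [w' [Xw' ew]] := D2 (pi *: w) (ex_intro _ w (conj Xw erefl)).
  have e : pi * bf (Fm x) w = c * sigma (bf x w').
    by rewrite -bfZr ew Fform.
  by apply/(intc_eq e)/s_int; apply: hx.
move=> _ [x [hx ->]]; exists (Fi (pi *: x)); split; last by rewrite FiK.
move=> w Xw.
have e : pi * bf x (Fm w) = c * sigma (bf (Fi (pi *: x)) w).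
  by rewrite -Fform FiK bfZl.
apply/s_int; apply/(intc_eq e); apply: hx; apply: D1; by exists w.
Qed.

Lemma sd_step (B : 'M[L]_m) : B \in unitmx -> Dieu (lat B) ->
  sub_le (lat B) (perp v J (lat B)) -> ~ sub_le (perp v J (lat B)) (lat B) ->
  exists X : 'rV[L]_m -> Prop, [/\ submod X, Dieu X, sub_le X (perp v J X),
     sub_le (lat B) X /\ sub_le X (perp v J (lat B)) & exists x, X x /\ ~ lat B x].
Proof.
move=> uB DM MP nPM.
set M := lat B in DM MP nPM *; set P := perp v J M in MP nPM *.
have sMM : submod M := submod_lat B.
have sP : submod P := submod_perp M.
have [P0 PD PZ] := sP; have [M0 MD MZ] := sMM.
have DP := perp_Dieu DM.
have PM a w : P a -> M w -> OL (bf w a).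
  by move=> Pa Mw; rewrite bf_anti; apply: intLN; apply: Pa.
have [a1 ha1] := lat_bounded (invmx (J *m B^T)).
have [b hb] := lat_contains uB.
have eP := perp_lat uB.
pose Q k := sub_le (img (fun x => pi ^+ k *: x) P) M.
have QN : Q (b + a1)%N.
  move=> _ [x [Px ->]]; rewrite exprD -scalerA; apply: hb; apply: ha1; exact/eP.
have [e [Qe Qmin]] := min_nat QN.
have e0 : e != 0%N.
  apply/eqP => e0; apply: nPM => x Px; have := Qe (pi ^+ e *: x); rewrite e0 expr0 scale1r.
  by apply; exists x; rewrite scale1r.
have nQ : ~ Q e.-1 by apply: Qmin; rewrite prednK ?lt0n // ltnSn.
have XsubP (Y : 'rV[L]_m -> Prop) : sub_le Y P -> sub_le (sumP M Y) P.
  by move=> YP _ [x [y [Mx Yy ->]]]; apply: PD; [apply: MP | apply: YP].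
have MsubX (Y : 'rV[L]_m -> Prop) : submod Y -> sub_le M (sumP M Y).
  by move=> [Y0 _ _] x Mx; exists x, 0; rewrite addr0.
have YsubX (Y : 'rV[L]_m -> Prop) : sub_le Y (sumP M Y).
  by move=> x Yx; exists 0, x; rewrite add0r.
have strict (Y : 'rV[L]_m -> Prop) : ~ sub_le Y M -> exists x, sumP M Y x /\ ~ M x.
  move=> nYM; apply: NNPP => H; apply: nYM => x Yx; apply: NNPP => nMx; apply: H.
  by exists x; split => //; apply: YsubX.
case: (ltnP 1 e) => [e2|e1].
  set k := e.-1.
  pose Y := img (fun x => pi ^+ k *: x) P.
  have sY : submod Y := submod_imgpi k sP.
  have YP : sub_le Y P.
    by move=> _ [x [Px ->]]; apply: PZ => //; apply: intLX; apply: intL_pi.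
  exists (sumP M Y); split.
  - exact: submod_sumP.
  - apply: Dieu_sumP => //.
      move=> _ [x [Px ->]]; rewrite FpiX; apply: YsubX.
      by exists (Fm x); split => //; apply: DP.1; exists x.
    move=> _ [x [Px ->]].
    have [w [Pw ew]] := DP.2 (pi *: x) (ex_intro _ x (conj Px erefl)).
    exists (pi ^+ k *: w); split; first by apply: YsubX; exists w.
    by rewrite FpiX -ew !scalerA mulrC.
  - apply: integral_sumP.
    + by move=> x x' Mx Mx'; apply: MP.
    + by move=> x _ Mx [y [Py ->]]; rewrite bfZr; apply: intLM; [apply: intLX; apply: intL_pi | apply: PM].
    move=> _ _ [x [Px ->]] [y [Py ->]]; rewrite bfZl bfZr mulrA -exprD.
    have ee : (k + k = (k + k - e) + e)%N by rewrite /k; move: e2; clear; lia.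
    rewrite ee exprD -mulrA -bfZl; apply: intLM; first by apply: intLX; apply: intL_pi.
    by apply: PM => //; apply: Qe; exists x.
  - by split; [exact: MsubX | exact: XsubP].
  - by apply: strict.
have Q1 : Q 1%N by have -> : 1%N = e by case: (e) e0 e1 => [|[|]].
have piPM x : P x -> M (pi *: x).
  by move=> Px; have := Q1 (pi ^+ 1 *: x); rewrite expr1; apply; exists x.
case: (classic (sub_le (img Fm P) M)) => [FPM|nFPM].
  have [x0 [Px0 nx0]] : exists x0, P x0 /\ ~ M x0.
    apply: NNPP => H; apply: nPM => x Px; apply: NNPP => nMx; apply: H; by exists x.
  pose Y := fun y => exists t, OL t /\ y = t *: x0.
  have sY : submod Y := submod_line x0.
  have YP : sub_le Y P by move=> _ [t [ht ->]]; apply: PZ.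
  exists (sumP M Y); split.
  - exact: submod_sumP.
  - apply: Dieu_sumP => //.
      move=> _ [t [ht ->]]; rewrite FZ; apply: MsubX => //; apply: MZ; first by apply/s_int.
      by apply: FPM; exists x0.
    move=> _ [t [ht ->]].
    set z := Fi (pi *: x0).
    have Mz : M z.
      apply: (perp_perp uB) => y Py.
      have e' : pi * bf x0 (Fm y) = c * sigma (bf z y) by rewrite -Fform FiK bfZl.
      apply/s_int; apply/(intc_eq e'); apply: Px0; apply: FPM; by exists y.
    exists (sinv t *: z); split.
      by apply: MsubX => //; apply: MZ => //; apply/sinv_int.
    by rewrite FZ sinvK FiK !scalerA mulrC.
  - apply: integral_sumP.
    + by move=> x x' Mx Mx'; apply: MP.
    + by move=> x _ Mx [t [ht ->]]; rewrite bfZr; apply: intLM => //; apply: PM.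
    by move=> _ _ [t [ht ->]] [t' [ht' ->]]; rewrite bfZl bfZr Jalt !mulr0; left.
  - by split; [exact: MsubX | exact: XsubP].
  - apply: strict => h; apply: nx0; apply: h; exists 1; split; [exact: intL1 | by rewrite scale1r].
pose Y := img Fm P.
have sY : submod Y := submod_imgF sP.
have YP : sub_le Y P by apply: DP.1.
exists (sumP M Y); split.
- exact: submod_sumP.
- apply: Dieu_sumP => //.
    move=> _ [x [Px ->]]; apply: YsubX; exists (Fm x); split => //; apply: DP.1; by exists x.
  move=> _ [x [Px ->]]; exists (pi *: x); split.
    by apply: MsubX => //; apply: piPM.
  by rewrite FZ spi.
- apply: integral_sumP.
  + by move=> x x' Mx Mx'; apply: MP.
  + by move=> x _ Mx [y [Py ->]]; apply: PM => //; apply: YP; exists y.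
  move=> _ _ [x [Px ->]] [y [Py ->]]; rewrite Fform; apply/intc.
  rewrite -{1}spi -sM; apply/s_int; rewrite -bfZl; apply: PM => //; exact: piPM.
- by split; [exact: MsubX | exact: XsubP].
- exact: strict.
Qed.

Lemma sd_low (B : 'M[L]_m) : B \in unitmx -> sub_le (lat B) (perp v J (lat B)) ->
    0 <= v (\det B) *+ 2 + v (\det J).
Proof.
move=> uB0 h.
have uC : J *m B^T \in unitmx by rewrite unitmx_mul Junit unitmx_tr.
have hC : sub_le (lat B) (lat (invmx (J *m B^T))) by move=> x /h /(perp_lat uB0).
have [_ le _] := index_le uB0 hC.
move: le; rewrite det_inv det_mulmx det_tr vV ?mulf_neq0 ?det_neq0 // vM ?det_neq0 //.
set a := v (\det J); set b := v (\det B); lia.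
Qed.

Lemma sd_next (B0 : 'M[L]_m) : B0 \in unitmx -> Dieu (lat B0) ->
  sub_le (lat B0) (perp v J (lat B0)) -> ~ sub_le (perp v J (lat B0)) (lat B0) ->
  exists B', [/\ B' \in unitmx, Dieu (lat B'), sub_le (lat B') (perp v J (lat B')) &
                 v (\det B') < v (\det B0)].
Proof.
move=> uB0 DB0 iB0 nPM.
have [X [sX DX iX [BX XP] [x0 [Xx0 nx0]]]] := sd_step uB0 DB0 iB0 nPM.
have [a ha] := lat_bounded (invmx (J *m B0^T)).
have [B' [uB' eB']] := sandwich sX uB0 BX (fun x Xx => ha x (proj1 (perp_lat uB0 x) (XP x Xx))).
have [_ le eqc] := index_le uB0 (fun x h => proj2 (eB' x) (BX x h)).
exists B'; split => //.
- by apply: Dieu_eq DX => x; split => /eB'.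
- by move=> x /eB' /iX h y /eB'; apply: h.
rewrite lt_neqAle le andbT; apply/eqP => E; apply: nx0; apply: (eqc E); apply/eB'.
by [].
Qed.

Lemma sd_main (B : 'M[L]_m) : B \in unitmx -> Dieu (lat B) ->
  sub_le (lat B) (perp v J (lat B)) ->
  exists B', [/\ B' \in unitmx, Dieu (lat B') & sub_eq (perp v J (lat B')) (lat B')].
Proof.
suff: forall N : nat, forall B : 'M[L]_m, B \in unitmx -> Dieu (lat B) ->
    sub_le (lat B) (perp v J (lat B)) -> v (\det B) *+ 2 + v (\det J) <= N%:R ->
    exists B', [/\ B' \in unitmx, Dieu (lat B') & sub_eq (perp v J (lat B')) (lat B')].
  move=> H uB DB iB; have := sd_low uB iB; set z := _ + _ => z0.
  by apply: (H (absz z) B) => //; rewrite -/z; lia.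
elim=> [|N IH] B0 uB0 DB0 iB0 hN;
  (case: (classic (sub_le (perp v J (lat B0)) (lat B0))) => [PM|nPM];
   [by exists B0; split => // x; split; [apply: PM | apply: iB0] | ]);
  have [B' [uB' DB' iB' lt']] := sd_next uB0 DB0 iB0 nPM.
  have := sd_low uB' iB'; move: hN lt'; set z1 := v (\det B0); set z2 := v (\det B'); set z3 := v (\det J); lia.
apply: (IH B') => //; move: hN lt'; set z1 := v (\det B0); set z2 := v (\det B'); set z3 := v (\det J); lia.
Qed.

Lemma perpF (X : 'rV[L]_m -> Prop) : sub_eq (perp v J X) X ->
  sub_eq (perp v J (img Fm X)) (img (fun x => pi^-1 *: x) (img Fm X)).
Proof.
move=> sd z; split.
  move=> hz; set w := Fi z.
  have Xpw : X (pi *: w).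
    apply/sd => y Xy.
    rewrite bfZl; apply/s_int; rewrite sM spi; apply/intc.
    rewrite -Fform /w FiK; apply: hz; by exists y.
  exists (Fm (pi *: w)); split; first by exists (pi *: w).
  by rewrite FZ spi /w FiK scalerA mulVf // scale1r.
case=> _ [[t [Xt ->]] ->] _ [y [Xy ->]].
have e : pi * bf (pi^-1 *: Fm t) (Fm y) = c * sigma (bf t y).
  by rewrite bfZl mulrA mulfV // mul1r Fform.
apply/(intc_eq e)/s_int; exact: (proj2 (sd t) Xt y Xy).
Qed.

Definition bigsum (I : finType) (Y : I -> 'rV[L]_m -> Prop) (x : 'rV[L]_m) :=
  exists xs : I -> 'rV[L]_m, (forall i, Y i (xs i)) /\ x = \sum_i xs i.

Lemma submod_bigsum (I : finType) (Y : I -> 'rV[L]_m -> Prop) :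
  (forall i, submod (Y i)) -> submod (bigsum Y).
Proof.
move=> sY; split.
- exists (fun _ => 0); split; first by move=> i; case: (sY i).
  by rewrite big1.
- move=> _ _ [xs [hx ->]] [ys [hy ->]]; exists (fun i => xs i + ys i); split.
    by move=> i; case: (sY i) => _ D _; apply: D.
  by rewrite big_split.
- move=> t _ ht [xs [hx ->]]; exists (fun i => t *: xs i); split.
    by move=> i; case: (sY i) => _ _ Z; apply: Z.
  by rewrite scaler_sumr.
Qed.

Lemma bigsum_in (I : finType) (Y : I -> 'rV[L]_m -> Prop) i x :
  (forall i, submod (Y i)) -> Y i x -> bigsum Y x.
Proof.
move=> sY Yx; exists (fun i' => if i' == i then x else 0); split.
  by move=> i'; case: eqP => [->//|_]; case: (sY i').
rewrite (bigD1 i) //= eqxx big1 ?addr0 // => i' /negbTE ->; done.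
Qed.

Lemma bigsum_lin (I : finType) (Y : I -> 'rV[L]_m -> Prop) (S : 'rV[L]_m -> Prop)
    (h : 'rV[L]_m -> 'rV[L]_m) :
  h 0 = 0 -> (forall x y, h (x + y) = h x + h y) -> submod S ->
  (forall i y, Y i y -> S (h y)) -> forall x, bigsum Y x -> S (h x).
Proof.
move=> h0 hD [S0 SD SZ] hY _ [xs [hx ->]].
rewrite (big_morph h hD h0); apply: big_ind => // i _; exact: hY.
Qed.

Definition boundP (X : 'rV[L]_m -> Prop) (a : nat) := forall x, X x -> intM (pi ^+ a *: x).

Lemma boundP_mono X a b : (a <= b)%N -> boundP X a -> boundP X b.
Proof. by move=> ab h x /h; apply: intM_mono. Qed.

Lemma bound_bigsum (I : finType) (Y : I -> 'rV[L]_m -> Prop) :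
  (forall i, exists a, boundP (Y i) a) -> exists a, boundP (bigsum Y) a.
Proof.
move=> hY; have [g hg] := fin_choice hY.
exists (\max_i g i) => _ [xs [hx ->]]; rewrite scaler_sumr.
have: forall i, intM (pi ^+ (\max_i g i) *: xs i).
  by move=> i; apply: (boundP_mono (leq_bigmax i) (hg i)).
move=> h; apply: (big_ind (fun A : 'rV[L]_m => intM A)) => // [|x y]; [exact: intM0 | exact: intM_add].
Qed.

Lemma piE p q p' q' : (p + q' = p' + q)%N ->
  pi ^+ p * (pi^-1) ^+ q = pi ^+ p' * (pi^-1) ^+ q'.
Proof.
move=> e; rewrite !exprVn.
have q0 := piX_neq0 q; have q'0 := piX_neq0 q'.
apply: (mulIf q0); apply: (mulIf q'0); rewrite divfK //.
by rewrite -mulrA (mulrC (pi ^+ q)) mulrA divfK // -!exprD e.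
Qed.

Lemma iterF_lat d (B : 'M[L]_(d, m)) i z : lat B z -> lat (iter i (@FB d) B) (iter i Fm z).
Proof.
move=> hz; elim: i => [|i IH] //=.
by apply/(F_lat (iter i (@FB d) B)); exists (iter i Fm z).
Qed.

Definition Itr (i : nat) (X : 'rV[L]_m -> Prop) := iter i (fun Y => img Fm Y) X.

Lemma ItrE i X y : Itr i X y <-> img (iter i Fm) X y.
Proof.
elim: i y => [|i IH] y /=.
  by split; [move=> h; exists y | case=> t [Xt ->]].
split.
  by case=> t [/IH [u [Xu ->]] ->]; exists u.
by case=> u [Xu ->]; exists (iter i Fm u); split => //; apply/IH; exists u.
Qed.

Lemma submod_Itr i X : submod X -> submod (Itr i X).
Proof. by move=> sX; elim: i => [|i IH] //=; apply: submod_imgF. Qed.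

Lemma submod_imgs (a : L) (X : 'rV[L]_m -> Prop) : submod X -> submod (img (fun x => a *: x) X).
Proof.
case=> X0 XD XZ; split.
- by exists 0; rewrite scaler0.
- by move=> _ _ [x [Xx ->]] [y [Xy ->]]; exists (x + y); rewrite scalerDr; split => //; apply: XD.
- move=> t _ ht [x [Xx ->]]; exists (t *: x); split; last by rewrite !scalerA mulrC.
  by apply: XZ.
Qed.

Lemma s_piN e : sigma ((pi^-1) ^+ e) = (pi^-1) ^+ e.
Proof. by rewrite sX sV spi. Qed.

Lemma dieu_exists k (d : 'I_k -> nat) (B : forall j, 'M[L]_(d j, m)) (s r : 'I_k -> nat)
    (P0 : 'M[L]_m) :
  (forall j, (0 < s j)%N) -> (forall j, (r j <= s j)%N) ->
  (forall j, sub_eq (img (iter (s j) Fm) (lat (B j)))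
                    (img (fun x => pi ^+ r j *: x) (lat (B j)))) ->
  P0 \in unitmx -> (forall l, exists j i, row l P0 = row i (B j)) ->
  exists B0, B0 \in unitmx /\ Dieu (lat B0).
Proof.
clear vc.
move=> hs hr hiso uP0 hP0.
pose e j i := ((i * r j) %/ s j)%N.
pose Yn j i := img (fun x => (pi^-1) ^+ e j i *: x) (Itr i (lat (B j))).
pose M0 := bigsum (fun j => bigsum (fun i : 'I_(s j) => Yn j i)).
have sYn j i : submod (Yn j i) by apply/submod_imgs/submod_Itr/submod_lat.
have sM0 : submod M0 by apply: submod_bigsum => j; apply: submod_bigsum.
have [M00 M0D M0Z] := sM0.
have inM0 j i : (i < s j)%N -> sub_le (Yn j i) M0.
  move=> lt x Yx; apply: (bigsum_in (i := j)) => [j'|]; first by apply: submod_bigsum.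
  by apply: (bigsum_in (i := Ordinal lt)).
have e0 j : e j 0%N = 0%N by rewrite /e mul0n div0n.
have Y0 j x : lat (B j) x -> Yn j 0%N x.
  by move=> hx; exists x; rewrite e0 expr0 scale1r.
have intpi a : OL (pi ^+ a) by apply: intLX; apply: intL_pi.
have FM0 : sub_le (img Fm M0) M0.
  move=> _ [x [Mx ->]]; move: x Mx; apply: bigsum_lin => //; [exact: F0 | move=> j y].
  apply: bigsum_lin => //; [exact: F0 | move=> i _ [t [Tt ->]]].
  rewrite FZ s_piN.
  case: (ltnP i.+1 (s j)) => [lt|ge].
    have -> : (pi^-1) ^+ e j i *: Fm t =
        pi ^+ (e j i.+1 - e j i) *: ((pi^-1) ^+ e j i.+1 *: Fm t).
      rewrite scalerA -(mul1r ((pi^-1) ^+ e j i)) -(expr0 pi); congr (_ *: _).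
      apply: piE; rewrite add0n subnK // /e; have := hs j; have := hr j; nia.
    apply: M0Z => //; apply: (inM0 j i.+1 lt); exists (Fm t); split => //.
    by exists t.
  have si : s j = i.+1 by move: (ltn_ord i) ge; clear; lia.
  have [z' [Bz' ez']] : img (fun x => pi ^+ r j *: x) (lat (B j)) (Fm t).
    apply/hiso; rewrite si; apply/ItrE; by exists t.
  rewrite ez' scalerA.
  have -> : (pi^-1) ^+ e j i * pi ^+ r j = pi ^+ (r j - e j i) * (pi^-1) ^+ 0.
    rewrite mulrC; apply: piE; rewrite addn0 subnK // /e; have := hs j; have := hr j.
    move: (ltn_ord i); rewrite {2}si; nia.
  rewrite -scalerA; apply: M0Z => //; apply: (inM0 j 0%N (hs j)).
  by rewrite /Yn e0; exists z'.
have sFM0 : submod (img Fm M0) by apply: submod_imgF.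
have piM0 : sub_le (img (fun x => pi *: x) M0) (img Fm M0).
  move=> _ [x [Mx ->]]; move: x Mx.
  apply: (bigsum_lin (h := fun x => pi *: x)) => //; [exact: scaler0 | exact: scalerDr | move=> j y].
  apply: (bigsum_lin (h := fun x => pi *: x)) => //; [exact: scaler0 | exact: scalerDr | move=> i _ [t [Tt ->]]].
  case: i Tt => [[|i'] lti] /= Tt.
    have [w [Bw ew]] : img (iter (s j) Fm) (lat (B j)) (pi ^+ r j *: t).
      by apply/hiso; exists t.
    have [s' es] : exists s', s j = s'.+1 by case: (s j) (hs j) => // s' _; exists s'.
    set E := e j s'.
    exists (pi ^+ (1 + E - r j) *: ((pi^-1) ^+ E *: iter s' Fm w)); split.
      apply: M0Z => //; apply: (inM0 j s'); first by rewrite es.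
      by exists (iter s' Fm w); split => //; apply/ItrE; exists w.
    rewrite !FZ !s_piN spiX.
    change (Fm (iter s' Fm w)) with (iter s'.+1 Fm w); rewrite -es -ew.
    rewrite e0 expr0 scale1r !scalerA; congr (_ *: _).
    rewrite mulrAC -exprD (piE (p' := 1%N) (q' := 0%N)) ?expr1 ?expr0 ?mulr1 //.
    rewrite addn0 subnK ?addn1 //; have := hs j; have := hr j; rewrite /E /e es; nia.
  case: Tt => [u [Tu ->]]. 
  exists (pi ^+ (1 + e j i' - e j i'.+1) *: ((pi^-1) ^+ e j i' *: u)); split.
    apply: M0Z => //; apply: (inM0 j i'); first by apply: ltnW.
    by exists u.
  rewrite !FZ !spiX !s_piN !scalerA; congr (_ *: _).
  rewrite -{1}(expr1 pi); apply: piE.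
  rewrite subnK //; have := hs j; have := hr j; rewrite /e; nia.
have lowM0 : sub_le (lat P0) M0.
  apply: lat_sub => // l; have [j [i ->]] := hP0 l.
  by apply: (inM0 j 0%N (hs j)); apply: Y0; apply: lat_row.
have [a ha] : exists a, boundP M0 a.
  apply: bound_bigsum => j; apply: bound_bigsum => i.
  have [a ha] := lat_bounded (iter i (@FB (d j)) (B j)).
  exists (a + e j i)%N => _ [x [Tx ->]]; move/ItrE: Tx => [z [Bz ->]].
  rewrite scalerA exprD -mulrA exprVn mulfV ?piX_neq0 // mulr1.
  by apply: ha; apply: iterF_lat.
have [B0 [uB0 eB0]] := sandwich sM0 uP0 lowM0 ha.
exists B0; split => //; apply: Dieu_eq (_ : Dieu M0).
  by move=> x; split => /eB0.
by split.
Qed.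

Lemma lat_scale d a (B : 'M[L]_(d, m)) :
  sub_eq (lat (a *: B)) (img (fun x => a *: x) (lat B)).
Proof.
move=> x; split.
  by case=> y [hy ->]; exists (y *m B); split; [exists y | rewrite scalemxAr].
by case=> _ [[y [hy ->]] ->]; exists y; split; [ | rewrite scalemxAr].
Qed.

Lemma Dieu_scale k (X : 'rV[L]_m -> Prop) : Dieu X -> Dieu (img (fun x => pi ^+ k *: x) X).
Proof.
case=> D1 D2; split.
  move=> _ [_ [[x [Xx ->]] ->]]; exists (Fm x); split; last by rewrite FpiX.
  by apply: D1; exists x.
move=> _ [_ [[x [Xx ->]] ->]].
have [w [Xw ew]] := D2 (pi *: x) (ex_intro _ x (conj Xx erefl)).
exists (pi ^+ k *: w); split; first by exists w.
by rewrite FpiX -ew !scalerA mulrC.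
Qed.

Lemma dieu_integral (B0 : 'M[L]_m) : B0 \in unitmx -> Dieu (lat B0) ->
  exists B1, [/\ B1 \in unitmx, Dieu (lat B1) & sub_le (lat B1) (perp v J (lat B1))].
Proof.
move=> uB0 DB0.
have [a ha] := intM_bound (B0 *m J *m B0^T).
exists (pi ^+ a *: B0); split.
- by rewrite unitmxZ // unitfE piX_neq0.
- by apply: Dieu_eq (Dieu_scale a DB0) => x; apply: iff_sym; apply: lat_scale.
- move=> x0 [y [hy ->]] x1 [y' [hy' ->]].
  have : intM (y *m (pi ^+ (a + a) *: (B0 *m J *m B0^T)) *m y'^T).
    apply: intM_mul; first apply: intM_mul.
    + by move=> i j; rewrite (ord1 i); apply: hy.
    + by apply: intM_mono ha; apply: leq_addl.
    by move=> i j; rewrite mxE (ord1 j); apply: hy'.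
  move=> /(_ 0 0); congr (OL _); rewrite /bform; congr (_ 0 0).
  by rewrite exprD -scalerA !linearZ /= trmx_mul -!scalemxAl !mulmxA.
Qed.

Definition Amx := FB (1%:M : 'M[L]_m).

Lemma F_A x : Fm x = sm x *m Amx.
Proof. by rewrite -{1}(mulmx1 x) F_mul. Qed.

Lemma sm_row d (B : 'M[L]_(d, m)) l : sm (row l B) = row l (sm B).
Proof. by apply/rowP => j; rewrite !mxE. Qed.

Lemma FB_A d (B : 'M[L]_(d, m)) : FB B = sm B *m Amx.
Proof. by apply/row_matrixP => l; rewrite row_mul rowK F_A sm_row. Qed.

Lemma Jentry i j : J i j = bf (row i 1%:M) (row j 1%:M).
Proof. by rewrite bf_row trmx1 mulmx1 -row_mul mul1mx mxE. Qed.

Lemma AJA : Amx *m J *m Amx^T = c *: sm J.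
Proof.
apply/matrixP => i j.
have -> : (Amx *m J *m Amx^T) i j = bf (row i Amx) (row j Amx).
  by rewrite bf_row -!row_mul [RHS]mxE.
by rewrite !rowK Fform -Jentry !mxE.
Qed.

Lemma vdetA : \det Amx != 0 /\ v (\det Amx) + v (\det Amx) = v c *+ m.
Proof.
clear vc.
have := congr1 determinant AJA.
rewrite !det_mulmx det_tr detZ sm_det => e.
have dJ := det_neq0 Junit.
have r0 : c ^+ m * sigma (\det J) != 0 by rewrite mulf_neq0 ?expf_neq0 ?s_eq0.
have dA : \det Amx != 0.
  by apply: contraNneq r0 => h; rewrite -e h !mul0r.
split => //.
have := congr1 v e; rewrite !vM ?mulf_neq0 ?expf_neq0 ?s_eq0 // sv // vX //.
by move=> h; apply: (addIr (v (\det J))); rewrite -h addrAC.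
Qed.

Lemma vdet_stack (K : nat) (P : 'M[L]_(K, m)) (D : 'M[L]_K) :
  K = m -> \rank P = m -> sm P *m Amx = D *m P ->
  \det D != 0 /\ v (\det Amx) = v (\det D).
Proof.
clear vc.
move=> eK; subst K => rP e.
have uP : P \in unitmx by rewrite -row_full_unit /row_full rP.
have := congr1 determinant e; rewrite !det_mulmx sm_det => e'.
have dP := det_neq0 uP; have [dA _] := vdetA.
have dD : \det D != 0.
  have sP0 : sigma (\det P) != 0 by rewrite s_eq0.
  apply: contraNneq (mulf_neq0 sP0 dA) => h.
  by rewrite e' h mul0r.
split => //.
have := congr1 v e'; rewrite !vM ?s_eq0 // sv //.
by move=> h; apply: (addrI (v (\det P))); rewrite h addrC.
Qed.

Lemma row_scaleZ p q (a : L) (M : 'M[L]_(p, q)) l : row l (a *: M) = a *: row l M.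
Proof. by apply/rowP => j; rewrite !mxE. Qed.

Lemma sm_iter_row d i (l : 'I_d) : iter i sm (row l (1%:M : 'M[L]_d)) = row l 1%:M.
Proof.
elim: i => [|i IH] //=; rewrite IH; apply/rowP => j; rewrite !mxE.
by case: (_ == _); rewrite ?s1 ?s0.
Qed.

Lemma intM_smi p q i (A : 'M[L]_(p, q)) : intM A -> intM (iter i sm A).
Proof. by move=> h; elim: i => [|i IH] //=; apply/intM_sm. Qed.

Lemma vdet_piece d (B : 'M[L]_(d, m)) (Aj : 'M[L]_d) (s r : nat) :
  (0 < s)%N -> row_free B -> FB B = Aj *m B ->
  sub_eq (img (iter s Fm) (lat B)) (img (fun x => pi ^+ r *: x) (lat B)) ->
  \det Aj != 0 /\ v (\det Aj) *+ s = (r * d)%N%:Z.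
Proof.
clear vc.
move=> s0 rB eF hiso.
pose iA i := iter i (fun X => sm X *m Aj) (1%:M : 'M[L]_d).
have C1 i (y : 'rV[L]_d) : iter i Fm (y *m B) = iter i sm y *m iA i *m B.
  elim: i => [|i IH] /=; first by rewrite mulmx1.
  by rewrite IH F_mul eF !sm_mul !mulmxA.
have rowl l : row l B = row l 1%:M *m B by rewrite -row_mul mul1mx.
have ha : forall l, exists y : 'rV[L]_d, (forall j, OL (y 0 j)) /\ row l (iA s) = pi ^+ r *: y.
  move=> l; have [z [[y [hy ez]] e]] := proj1 (hiso (iter s Fm (row l B)))
      (ex_intro _ (row l B) (conj (lat_row B l) erefl)).
  exists y; split => //; apply: (row_free_inj rB).
  by rewrite /= -scalemxAl -ez -e rowl C1 sm_iter_row -(row_mul l 1%:M) mul1mx.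
have [gy hgy] := fin_choice ha.
pose G := \matrix_l gy l.
have eG : iA s = pi ^+ r *: G.
  by apply/row_matrixP => l; rewrite row_scaleZ rowK (proj2 (hgy l)).
have iG : intM G by move=> i j; rewrite mxE; apply: (proj1 (hgy i)).
have hb : forall l, exists z : 'rV[L]_d, (forall j, OL (z 0 j)) /\
    pi ^+ r *: row l 1%:M = iter s sm z *m iA s.
  move=> l; have [w [[z [hz ->]] e]] := proj2 (hiso (pi ^+ r *: row l B))
      (ex_intro _ (row l B) (conj (lat_row B l) erefl)).
  exists z; split => //; apply: (row_free_inj rB).
  by rewrite /= -scalemxAl -rowl e C1.
have [gz hgz] := fin_choice hb.
pose H := \matrix_l iter s sm (gz l).
have iH : intM H.
  move=> i j; rewrite mxE.
  have h : intM (gz i) by move=> a b; rewrite (ord1 a); exact: (proj1 (hgz i)).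
  exact: (intM_smi s h).
have eH : pi ^+ r *: 1%:M = H *m iA s.
  apply/row_matrixP => l; rewrite row_scaleZ row_mul rowK (proj2 (hgz l)) //.
have HG : H *m G = 1%:M.
  apply: (scalerI (piX_neq0 r)); rewrite eH eG scalemxAr //.
have dHG : \det H * \det G = 1 by rewrite -det_mulmx HG det1.
have dG : \det G != 0.
  by apply/eqP => h; move: dHG; rewrite h mulr0 => /eqP; rewrite eq_sym oner_eq0.
have dH : \det H != 0.
  by apply/eqP => h; move: dHG; rewrite h mul0r => /eqP; rewrite eq_sym oner_eq0.
have vG : v (\det G) = 0.
  have := congr1 v dHG; rewrite vM // v1.
  have := vdet_ge0 iH dH; have := vdet_ge0 iG dG.
  set a := v (\det G); set b := v (\det H); lia.
have dS : \det (iA s) = pi ^+ (r * d) * \det G by rewrite eG detZ exprM.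
have dS0 : \det (iA s) != 0 by rewrite dS mulf_neq0 ?piX_neq0.
have C2 i : \det (iA i.+1) = sigma (\det (iA i)) * \det Aj.
  by rewrite /iA iterS det_mulmx sm_det.
have dAj : \det Aj != 0.
  have [s' es] : exists s', s = s'.+1 by exists s.-1; rewrite prednK.
  by move: dS0; rewrite es C2; apply: contraNneq => ->; rewrite mulr0.
split => //.
have C3 i : \det (iA i) != 0 /\ v (\det (iA i)) = v (\det Aj) *+ i.
  elim: i => [|i [IH1 IH2]]; first by rewrite /iA /= det1 v1 oner_neq0.
  rewrite C2 mulf_neq0 ?s_eq0 // vM ?s_eq0 // sv // IH2 mulrSr; split => //.
have [_ <-] := C3 s.
by rewrite dS vM ?piX_neq0 // vpiX vG addr0.
Qed.

Lemma det_castmx n n' (e : n = n') (M : 'M[L]_n) : \det (castmx (e, e) M) = \det M.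
Proof. by case: n' / e; rewrite castmx_id. Qed.

Lemma det_mxdiag k (p_ : 'I_k -> nat) (B_ : forall i, 'M[L]_(p_ i)) :
  \det (\mxdiag_i B_ i) = \prod_i \det (B_ i).
Proof.
elim: k p_ B_ => [|k IH] p_ B_.
  move: (\mxdiag_i B_ i); rewrite big_ord0 => M; by rewrite det_mx00 big_ord0.
by rewrite mxdiag_recl det_castmx det_ublock IH big_ord_recl.
Qed.

Lemma v_prod (I : finType) (G : I -> L) : (forall i, G i != 0) ->
  \prod_i G i != 0 /\ v (\prod_i G i) = \sum_i v (G i).
Proof.
move=> h; apply: (big_rec2 (fun a b => a != 0 /\ v a = b)).
  by rewrite oner_neq0 v1.
move=> i a b _ [a0 <-]; rewrite mulf_neq0 // vM //.
Qed.

Lemma vdet_sum k (d : 'I_k -> nat) (B : forall j, 'M[L]_(d j, m)) (Aj : forall j, 'M[L]_(d j)) :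
  (\sum_j d j)%N = m -> \rank (\mxcol_j B j) = m ->
  (forall j, FB (B j) = Aj j *m B j) -> (forall j, \det (Aj j) != 0) ->
  v (\det Amx) = \sum_j v (\det (Aj j)).
Proof.
clear vc.
move=> eK rP eF dA.
have e : sm (\mxcol_j B j) *m Amx = \mxdiag_j Aj j *m \mxcol_j B j.
  have -> : sm (\mxcol_j B j) = \mxcol_j sm (B j).
    by apply/matrixP => i j; rewrite !mxE.
  rewrite mxcol_mul mul_mxdiag_mxcol; apply: eq_mxcol => j.
  by rewrite -FB_A eF.
have [_ ->] := vdet_stack eK rP e.
by rewrite det_mxdiag; case: (v_prod dA).
Qed.

Lemma dieu_exists' k (d : 'I_k -> nat) (B : forall j, 'M[L]_(d j, m)) (s r : 'I_k -> nat) :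
  (forall j, (0 < s j)%N) -> (forall j, (r j <= s j)%N) ->
  (forall j, sub_eq (img (iter (s j) Fm) (lat (B j)))
                    (img (fun x => pi ^+ r j *: x) (lat (B j)))) ->
  (\sum_j d j)%N = m -> \rank (\mxcol_j B j) = m ->
  exists B0, B0 \in unitmx /\ Dieu (lat B0).
Proof.
clear vc.
move=> hs hr hiso eK rP.
have gen : forall K (P : 'M[L]_(K, m)), K = m -> \rank P = m ->
    (forall l, exists j i, row l P = row i (B j)) -> exists B0, B0 \in unitmx /\ Dieu (lat B0).
  move=> K P e; subst K => rP' hP.
  have uP : P \in unitmx by rewrite -row_full_unit /row_full rP'.
  exact: (dieu_exists hs hr hiso uP hP).
apply: (gen _ _ eK rP) => l; rewrite row_mxcol; by do 2 eexists.
Qed.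

Lemma fin_choice_dep (I : finType) (T : I -> Type) (P : forall i, T i -> Prop) :
  (forall i, exists t, P i t) -> exists g : (forall i, T i), forall i, P i (g i).
Proof.
move=> H; exists (fun i => proj1_sig (constructive_indefinite_description _ (H i))).
by move=> i; case: (constructive_indefinite_description _ _).
Qed.

Lemma minuscule_facts (w : nat) : minuscule_of_weight v pi Fm w ->
  (exists B0, B0 \in unitmx /\ Dieu (lat B0)) /\ v (\det Amx) = w%:Z.
Proof.
clear vc.
rewrite /minuscule_of_weight => -[k [U [r [s [hiso hsum hdir hslope hw]]]]].
rewrite /isoclinic in hiso.
have hs j : (0 < s j)%N by exact: (proj1 (hiso j)).
have hFU j x : (x <= U j)%MS -> (Fm x <= U j)%MS by exact: (proj1 (proj2 (hiso j)) x).
have [Bf hBf] := fin_choice_dep (fun j => proj2 (proj2 (hiso j))).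
have rB j : row_free (Bf j) by exact: (proj1 (hBf j)).
have eBU j : (Bf j == U j)%MS by exact: (proj1 (proj2 (hBf j))).
have isoB j := proj2 (proj2 (hBf j)).
have r0 j : (0 <= r j) /\ (r j <= (s j)%:Z).
  have := hslope j; case/andP; have sp : (0 : rat) < (s j)%:R by rewrite ltr0n.
  move=> h1 h2; split.
    by move: h1; rewrite pmulr_lge0 ?invr_gt0 // ler0z.
  by move: h2; rewrite ler_pdivrMr // mul1r pmulrn ler_int.
pose rn j := absz (r j).
have er j : r j = (rn j)%:Z by have := r0 j; rewrite /rn; case: (r j) => //= n [/negP []].
have hiso' j : sub_eq (img (iter (s j) Fm) (lat (Bf j)))
    (img (fun x => pi ^+ rn j *: x) (lat (Bf j))).
  by have := isoB j; rewrite er -exprnP.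
have hr j : (rn j <= s j)%N by have := r0 j; rewrite er lez_nat => -[].
pose Aj j := FB (Bf j) *m pinvmx (Bf j).
have eF j : FB (Bf j) = Aj j *m Bf j.
  rewrite /Aj mulmxKpV //; apply/row_subP => l; rewrite rowK.
  have e := eqmxP (eBU j).
  rewrite e; apply: hFU; rewrite -e; exact: row_sub.
have vp j := vdet_piece (hs j) (rB j) (eF j) (hiso' j).
have eK : (\sum_j \rank (U j))%N = m.
  by move/mxdirectP: hdir => /= <-; rewrite hsum mxrank1.
have rP : \rank (\mxcol_j Bf j) = m.
  rewrite eqmx_col.
  have e : (\sum_j <<Bf j>> :=: \sum_j U j)%MS.
    by apply: eqmx_sums => j _; apply: eqmx_trans (genmxE _) (eqmxP (eBU j)).
  by rewrite e hsum mxrank1.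
split; first exact: dieu_exists' hs hr hiso' eK rP.
rewrite (vdet_sum eK rP eF (fun j => proj1 (vp j))).
apply: (@intr_inj rat); rewrite rmorph_sum /= -[RHS]/(w%:~R) -pmulrn -hw.
apply: eq_bigr => j _.
have sj0 : ((s j)%:R : rat) != 0 by rewrite pnatr_eq0 -lt0n.
apply: (mulIf sj0); rewrite er -mulrA divfK //.
have := congr1 (fun z : int => z%:~R : rat) (proj2 (vp j)); rewrite /= rmorphMn -mulr_natr.
by move=> ->; rewrite -!pmulrn natrM mulrC.
Qed.

Lemma main_vc : (exists B0, B0 \in unitmx /\ Dieu (lat B0)) ->
  exists B : 'M[L]_m, B \in unitmx /\
    [/\ sub_eq (perp v J (lat B)) (lat B),
        sub_le (img Fm (lat B)) (lat B),
        sub_le (img (fun x => pi *: x) (lat B)) (img Fm (lat B)) &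
        sub_eq (perp v J (img Fm (lat B))) (img (fun x => pi^-1 *: x) (img Fm (lat B)))].
Proof.
case=> B0 [uB0 DB0].
have [B1 [uB1 DB1 iB1]] := dieu_integral uB0 DB0.
have [B [uB [D1 D2] sd]] := sd_main uB1 DB1 iB1.
exists B; split => //; split => //.
exact: perpF.
Qed.
End Val.

Unset Implicit Arguments.

Theorem lemma2p2 (L : fieldType) (v : L -> int) (pi : L) (sigma : L -> L)
    (p f : nat) (n : nat) (J : 'M[L]_(2 * n)) (Fm : 'rV[L]_(2 * n) -> 'rV[L]_(2 * n))
    (c : L) :
  unramified_completion v pi sigma p f ->
  symplectic_isocrystal sigma J Fm c ->
  minuscule_of_weight v pi Fm n ->
  exists B : 'M[L]_(2 * n),
    B \in unitmx /\
    let M := lattice_of v B in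
    let FM := img Fm M in
    [/\ sub_eq (perp v J M) M,
        sub_le FM M,
        sub_le (img (fun x => pi *: x) M) FM &
        sub_eq (perp v J FM) (img (fun x => pi^-1 *: x) FM)].
Proof.
move=> UC SI MW.
case: UC => _ vM vD pi0 vpi _ _ _ _ _ sD sM s1 sbij sv _ spi.
case: SI => Junit [Jalt [FD [FZ [Fbij [c0 Fform]]]]].
case: (posnP n) => [n0|npos].
  subst n.
  have E (x y : 'rV[L]_(2 * 0)) : x = y.
    by apply/rowP => -[i hi]; exfalso; move: hi; rewrite muln0.
  have L0 : lattice_of v (1%:M : 'M[L]_(2 * 0)) 0.
    by exists 0; split; [move=> i; left; rewrite mxE | rewrite mul0mx].
  have P0 (M : 'rV[L]_(2 * 0) -> Prop) x : perp v J M x.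
    by move=> y _; rewrite (E x 0) /bform !mul0mx mxE; left.
  exists 1%:M; split; first exact: unitmx1.
  split.
  - by move=> x; split => _; [rewrite (E x 0) | apply: P0].
  - by move=> x _; rewrite (E x 0).
  - by move=> x _; exists 0; split; [exact: L0 | apply: E].
  - move=> x; split => _; last by apply: P0.
    exists 0; split; last by apply: E.
    by exists 0; split; [exact: L0 | apply: E].
have [hD hv] := minuscule_facts vM vD pi0 vpi sD sM s1 sbij sv spi FD FZ Junit Fform c0 MW.
have [_ hA] := vdetA vM sD sM s1 sbij sv Junit Fform c0.
have vc : v c = 1.
  move: hA; rewrite hv -mulr_natr natz => h.
  move: npos h; set z := v c; clear; nia.
have [B [uB [h1 h2 h3 h4]]] :=
  main_vc vM vD pi0 vpi sD sM s1 sbij sv spi FD FZ Fbij Junit Jalt Fform c0 vc hD.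
by exists B; split => //; split.
Qed.
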